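(* Let $G$ be a finite induced regular group with $[G:Z(G)]=p^q$, where $p$ and $q$ are primes. Then $G/Z(G)$ is an elementary $p$-group. Moreover, for each $x\in G\setminus Z(G)$, $|\beta_G(x)|=(p-1)|Z(G)|$.
   Context: For a finite group $G$, $C_G(x)$ denotes the centralizer of $x\in G$ and $Z(G)$ the center; $\beta_G(x)=\{y\in G\mid C_G(y)=C_G(x)\}$. The non-centralizer graph $\Upsilon_G$ is the simple graph with vertex set $G$ in which two distinct vertices $x,y$ are adjacent iff $C_G(x)\neq C_G(y)$; the induced non-centralizer graph $\Upsilon_{G\setminus Z(G)}$ is its induced subgraph on $G\setminus Z(G)$. $G$ is called induced regular if $\Upsilon_{G\setminus Z(G)}$ is a regular graph. A group is called an elementary $p$-group if every non-identity element has order exactly $p$ (it need not be abelian). *)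

(* Defs.v *)
From mathcomp Require Import all_boot all_fingroup all_solvable.
Set Implicit Arguments. Unset Strict Implicit. Unset Printing Implicit Defensive.
Local Open Scope group_scope.

Definition beta (gT : finGroupType) (G : {set gT}) (x : gT) : {set gT} :=
  [set y in G | 'C_G[y] == 'C_G[x]].

Definition noncent_adj (gT : finGroupType) (G : {set gT}) (x y : gT) : bool :=
  (x != y) && ('C_G[x] != 'C_G[y]).

Definition induced_deg (gT : finGroupType) (G : {group gT}) (x : gT) : nat :=
  #|[set y in G :\: 'Z(G) | noncent_adj G x y]|.

Definition induced_regular (gT : finGroupType) (G : {group gT}) : Prop :=
  exists k, forall x, x \in G :\: 'Z(G) -> induced_deg G x = k.

Definition elementary_pgroup (gT : finGroupType) (p : nat) (H : {set gT}) : Prop :=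
  forall x, x \in H -> x != 1 -> #[x] = p.

(* Main.v *)
Require Import Defs.
From mathcomp Require Import all_boot all_fingroup all_solvable.
From mathcomp Require Import zify.
Set Implicit Arguments. Unset Strict Implicit. Unset Printing Implicit Defensive.
Local Open Scope group_scope.

Lemma dvd_sub1_exp (p j : nat) : 1 < p -> 0 < j ->
  forall n, (p ^ j - 1 %| p ^ n - 1)%N -> (j %| n)%N.
Proof.
move=> p1 j0 n; elim: n {-2}n (leqnn n) => [|N IH] n le.
  by move: le; rewrite leqn0 => /eqP ->; rewrite dvdn0.
case: (ltnP n j) => [ltnj|lejn] H.
  have: (p ^ n - 1 < p ^ j - 1)%N.
    have h1 : (p ^ n < p ^ j)%N by rewrite ltn_exp2l.
    have h2 : (0 < p ^ n)%N by rewrite expn_gt0 ltnW.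
    lia.
  move=> lt; case: (posnP (p ^ n - 1)) => [e|pos]; last first.
    by have := dvdn_leq pos H; lia.
  have : (p ^ n <= 1 ^ n)%N by rewrite exp1n; lia.
  case: (posnP n) => [->|n0]; first by rewrite dvdn0.
  by rewrite leq_exp2r // leqNgt p1.
move: H le; have [m ->] : exists m, n = (m + j)%N by exists (n - j)%N; lia.
move=> H le.
have h : (p ^ (m + j) - 1 = p ^ m * (p ^ j - 1) + (p ^ m - 1))%N.
  rewrite expnD; have := expn_gt0 p m; have := expn_gt0 p j.
  rewrite (ltnW p1) /=. nia.
move: H; rewrite h dvdn_addr ?dvdn_mull // => H.
rewrite dvdn_addl //; apply: IH H; lia.
Qed.

Section S.
Variables (gT : finGroupType) (G : {group gT}).

Lemma CG_eq_G x : x \in G -> ('C_G[x] == G) = (x \in 'Z(G)).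
Proof.
move=> Gx; rewrite eqEsubset subsetIl /= subsetI subxx /= sub_cent1.
by rewrite /center inE Gx.
Qed.

Lemma beta_subD x : x \in G :\: 'Z(G) -> beta G x \subset G :\: 'Z(G).
Proof.
case/setDP=> Gx nZx; apply/subsetP=> y; rewrite !inE => /andP[Gy /eqP e].
rewrite Gy andbT; apply/negP=> Zy; case/negP: nZx.
rewrite -(CG_eq_G Gx) -e (CG_eq_G Gy).
by move: Zy; rewrite /center inE Gy.
Qed.

Lemma deg_beta x : x \in G :\: 'Z(G) ->
  induced_deg G x = (#|G :\: 'Z(G)| - #|beta G x|)%N.
Proof.
move=> Dx; rewrite /induced_deg; have := setIidPr (beta_subD Dx); move=> ee; rewrite -{1}ee -cardsD.
apply: eq_card => y; rewrite !inE /noncent_adj.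
case: (y \in G); case: (y \in 'C(G)) => //=.
  by rewrite andbF.
rewrite andbT; case: (x =P y) => [->|_]; first by rewrite eqxx.
by rewrite eq_sym.
Qed.

Lemma beta_center x : beta G x \subset 'Z('C_G[x]).
Proof.
apply/subsetP=> y; rewrite inE => /andP[Gy /eqP <-].
apply/centerP; split; first by rewrite inE Gy cent1id.
by move=> z; rewrite inE => /andP[_ /cent1P].
Qed.

Lemma cent_incl x y : y \in 'Z('C_G[x]) -> 'C_G[x] \subset 'C_G[y].
Proof.
case/centerP=> _ cy; rewrite subsetI subsetIl /=.
by apply/subsetP=> z /cy cz; apply/cent1P.
Qed.

Lemma cosetC x y : x \in G -> y \in G ->
  coset 'Z(G) y \in <[coset 'Z(G) x]> -> 'C_G[x] \subset 'C_G[y].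
Proof.
move=> Gx Gy /cycleP[a e].
have nZ : G \subset 'N('Z(G)) by apply: normal_norm; apply: center_normal.
have Nx := subsetP nZ x Gx; have Ny := subsetP nZ y Gy.
have Nxa : x ^+ a \in 'N('Z(G)) by rewrite groupX.
rewrite -morphX // in e.
move/rcoset_kercosetP: e => /(_ Ny Nxa) /rcosetP[z Zz ->].
apply/subsetP=> g; rewrite !in_setI => /andP[Gg cgx].
move/cent1P: cgx => cgx.
rewrite Gg /=; apply/cent1P; apply: commuteM.
  by case/centerP: Zz => _ /(_ g Gg).
exact: commuteX.
Qed.

Lemma beta_val (p q : nat) :
  prime p -> prime q -> induced_regular G -> #|G : 'Z(G)| = (p ^ q)%N ->
  forall y, y \in G :\: 'Z(G) -> #|beta G y| = ((p - 1) * #|'Z(G)|)%N.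
Proof.
move=> pp qp [k reg] idx.
have ZG : 'Z(G) \subset G := center_sub G.
have p1 : 1 < p := prime_gt1 pp.
have q1 : 1 < q := prime_gt1 qp.
have Zpos : 0 < #|'Z(G)| := cardG_gt0 _.
have cardG : #|G| = (p ^ q * #|'Z(G)|)%N by rewrite -idx mulnC Lagrange.
have cardD : #|G :\: 'Z(G)| = ((p ^ q - 1) * #|'Z(G)|)%N.
  by rewrite cardsD (setIidPr ZG) cardG mulnBl mul1n.
have pq1 : 1 < p ^ q by rewrite -(exp1n q) ltn_exp2r ?(ltnW q1).
have [x0 Dx0] : exists x0, x0 \in G :\: 'Z(G).
  apply/set0Pn; rewrite -card_gt0 cardD muln_gt0 Zpos andbT; lia.
have constb : forall x y, x \in G :\: 'Z(G) -> y \in G :\: 'Z(G) ->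
    #|beta G x| = #|beta G y|.
  move=> x y Dx Dy; have := deg_beta Dx; have := deg_beta Dy.
  rewrite !reg // => e1 e2.
  have := subset_leq_card (beta_subD Dx); have := subset_leq_card (beta_subD Dy).
  by move=> h1 h2; rewrite -(subKn h1) -(subKn h2) -e1 -e2.
case: (@arg_maxnP _ x0 (mem (G :\: 'Z(G))) (fun y => #|'C_G[y]|) Dx0) => x Dx maxx.
have Gx : x \in G by case/setDP: Dx.
set B := 'Z('C_G[x]).
have BG : B \subset G by apply: subset_trans (center_sub _) (subsetIl _ _).
have betaB : beta G x = B :\: 'Z(G).
  apply/eqP; rewrite eqEsubset; apply/andP; split.
    apply/subsetP=> y yb; rewrite inE (subsetP (beta_center x) y yb) andbT.
    by case/setDP: (subsetP (beta_subD Dx) y yb).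
  apply/subsetP=> y; case/setDP=> By nZy.
  have Gy : y \in G := subsetP BG y By.
  have Dy : y \in G :\: 'Z(G) by rewrite inE nZy Gy.
  have sub := cent_incl By.
  have le := maxx y Dy.
  have e : 'C_G[x] = 'C_G[y] by apply/eqP; rewrite eqEcard sub; exact: le.
by rewrite /beta inE Gy e; apply/eqP.
have ZB : 'Z(G) \subset B.
  apply/subsetP=> z Zz; case/centerP: (Zz) => Gz cz.
  apply/centerP; split.
    rewrite inE Gz; apply/cent1P; exact: cz.
  by move=> g; rewrite inE => /andP[Gg _]; apply: cz.
have xB : x \in B.
  apply/centerP; split; first by rewrite inE Gx cent1id.
  by move=> g; rewrite !in_setI => /andP[_ /cent1P].
have := Lagrange_index BG ZB; rewrite idx => e.
have : (#|B : 'Z(G)| %| p ^ q)%N by rewrite -e dvdn_mull.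
case/(dvdn_pfactor _ _ pp) => j jq ej.
have cardB : #|B| = (p ^ j * #|'Z(G)|)%N by rewrite -ej mulnC Lagrange.
have cbeta : #|beta G x| = ((p ^ j - 1) * #|'Z(G)|)%N.
  by rewrite betaB cardsD (setIidPr ZB) cardB mulnBl mul1n.
have j0 : 0 < j.
  case: (posnP j) => // j0; exfalso.
  have : 'Z(G) :==: B by rewrite eqEcard ZB cardB j0 expn0 mul1n /=.
  move/eqP=> eB; case/setDP: Dx => _; by rewrite eB xB.
pose f := fun y => 'C_G[y].
have partP := preim_partitionP f (G :\: 'Z(G)).
have := card_partition partP.
rewrite (eq_bigr (fun _ => #|beta G x|)); last first.
  move=> A; rewrite /preim_partition /equivalence_partition => /imsetP[x' Dx' ->].
  rewrite -(constb x' x Dx' Dx); apply: eq_card => y.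
  rewrite /beta !inE /f eq_sym.
  case Gy: (y \in G); rewrite /= ?andbF //.
  case Cy: (y \in 'C(G)); rewrite /= ?andbT //.
  apply/esym/negbTE/negP => /eqP ey.
  have : y \in beta G x' by rewrite /beta inE Gy ey; apply/eqP.
  by move/(subsetP (beta_subD Dx')); rewrite !inE Gy Cy.
rewrite sum_nat_const cardD cbeta mulnA => /eqP; rewrite eqn_pmul2r // => /eqP ee.
have dv : (p ^ j - 1 %| p ^ q - 1)%N by rewrite ee dvdn_mull.
have jq' := dvd_sub1_exp p1 j0 dv.
have j1 : j = 1%N.
  case/primeP: qp => _ /(_ j jq') /orP[/eqP //|/eqP jeq]; exfalso.
  have : B :==: G by rewrite eqEcard BG cardB cardG jeq /=.
  move/eqP=> eB; case/setDP: Dx => _ nZx; case/negP: nZx.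
  rewrite -(CG_eq_G Gx) eqEsubset subsetIl /= -{1}eB.
  exact: subset_trans (center_sub _) (subxx _).
move=> y Dy; by rewrite (constb y x Dy Dx) cbeta j1 expn1.
Qed.
End S.
Unset Implicit Arguments. Set Strict Implicit.

Theorem proposition3p6 (gT : finGroupType) (G : {group gT}) (p q : nat) :
  prime p -> prime q -> induced_regular G -> #|G : 'Z(G)| = (p ^ q)%N ->
  elementary_pgroup p (G / 'Z(G)) /\
  (forall x, x \in G :\: 'Z(G) -> #|beta G x| = ((p - 1) * #|'Z(G)|)%N).
Proof.
move=> pp qp reg idx; have bv := beta_val pp qp reg idx; split => //.
have p1 : 1 < p := prime_gt1 pp.
have nZ : G \subset 'N('Z(G)) by apply: normal_norm; apply: center_normal.
move=> X XG X1.
have XG' := XG.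
case/morphimP: XG' => y Ny Gy eX0.
have eX : X = coset 'Z(G) y := eX0.
have nZy : y \notin 'Z(G).
  by apply/negP=> Zy; case/negP: X1; apply/eqP; rewrite eX; exact: coset_id.
have Dy : y \in G :\: 'Z(G) by rewrite inE nZy Gy.
have ndvd : (#[X] %| p ^ q)%N by rewrite -idx -card_quotient // order_dvdG.
case/(dvdn_pfactor _ _ pp): ndvd => e _ ne.
have e0 : 0 < e.
  case: (posnP e) => // e0; case/negP: X1; rewrite -order_eq1 ne e0.
  by rewrite expn0.
pose K := coset 'Z(G) @*^-1 <[X]>.
pose N := coset 'Z(G) @*^-1 <[X ^+ p]>.
have NK : N \subset K by apply: morphpreS; rewrite cycle_subG mem_cycle.
have cardK : #|K| = (#|'Z(G)| * p ^ e)%N by rewrite /K card_cosetpre -ne.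
have pdvd : (p %| #[X])%N by rewrite ne -(expn1 p) dvdn_exp2l.
have cardN : #|N| = (#|'Z(G)| * p ^ e.-1)%N.
  rewrite /N card_cosetpre; have -> : #|<[X ^+ p]>%G| = #[X ^+ p] by [].
  rewrite (orderXdiv pdvd) ne -(prednK e0) expnS mulKn // ltnW //.
have KG : K \subset G.
  apply/subsetP=> w Kw; rewrite -(quotientGK (center_normal G)).
  move: w Kw; apply/subsetP; apply: morphpreS.
  by rewrite cycle_subG.
have Preb : K :\: N \subset beta G y.
  apply/subsetP=> w; case/setDP=> Kw nNw; have Gw := subsetP KG w Kw.
  move/morphpreP: Kw => [Nw] /cycleP[i ei].
  have npi : ~~ (p %| i)%N.
    apply/negP=> /dvdnP[k ik]; case/negP: nNw; apply/morphpreP; split=> //.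
    by rewrite ei ik mulnC expgM mem_cycle.
  have gen : generator <[X]> (X ^+ i).
    by rewrite generator_coprime ne coprime_pexpl // prime_coprime.
  rewrite -ei /generator in gen; move/eqP: gen => gen.
  rewrite /beta inE Gw; apply/eqP/eqP; rewrite eqEsubset; apply/andP; split.
    apply: cosetC => //; rewrite -eX -gen; exact: cycle_id.
  apply: cosetC => //; rewrite -eX gen; exact: cycle_id.
have := subset_leq_card Preb; rewrite cardsD (setIidPr NK) cardK cardN (bv y Dy).
rewrite -mulnBr mulnC leq_pmul2r; last exact: cardG_gt0.
case: e e0 ne {cardK cardN} => [//|[|e']] _ ne; first by rewrite ne expn1.
rewrite /= !expnS => h; exfalso.
have h1 : (0 < p ^ e')%N by rewrite expn_gt0 ltnW.
have h2 : (p * (p * p ^ e') - p * p ^ e' = (p * p ^ e') * (p - 1))%N.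
  by rewrite mulnBr muln1 mulnC.
rewrite h2 in h.
have : (p * 1 <= p * p ^ e')%N by rewrite leq_pmul2l // ltnW.
nia.
Qed.
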